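(* Let $P$ be a distribution on $\mathcal{X}$, $R>0$, $K>0$. Then \[ E_e(P,R,K)=\sup_{0\le\eta\le\rho\le 1}\big\{E_0(\rho,\eta,P)-\rho R-\eta K\big\}, \] where \[ E_e(P,R,K)=\min_{TV}\Big\{D(TV\|PW)+\big|A_{TV}-R+|B_{TV}-K|^{+}\big|^{+}\Big\},\qquad E_0(\rho,\eta,P)=-\log\sum_{y}\Big[\sum_x P(x)W^{\frac{1+\eta}{1+\rho}}(y|x)\Big]^{1+\rho}. \]
   Context: $\mathcal{X},\mathcal{Y}$ are finite alphabets and $W(y|x)$ is a conditional distribution on $\mathcal{Y}$ given $\mathcal{X}$. Logs are natural. $TV$ is a joint distribution on $\mathcal{Y}\times\mathcal{X}$ with $\mathcal{Y}$-marginal $T$ and conditional $V(x|y)$, minimized over all such distributions; $PW$ is $P(x)W(y|x)$; $D(TV\|PW)=\sum T(y)V(x|y)\log\frac{T(y)V(x|y)}{P(x)W(y|x)}$; $A_{TV}=\sum T(y)V(x|y)\log\frac{V(x|y)}{P(x)}$; $B_{TV}=\mathbb{E}_{TV}[-\log W(Y|X)]$; $|t|^{+}=\max\{0,t\}$. *)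

(* Defs.v *)
From HB Require Import structures.
From mathcomp Require Import all_boot all_order all_algebra.
From mathcomp Require Import all_classical all_reals all_analysis.
Set Implicit Arguments. Unset Strict Implicit. Unset Printing Implicit Defensive.
Import Order.TTheory GRing.Theory Num.Theory.
Local Open Scope ring_scope.

Section Defs.
Variables (R : realType) (X Y : finType).

Definition is_dist (T : finType) (P : T -> R) : Prop :=
  (forall x, 0 <= P x) /\ \sum_x P x = 1.

(* W(y|x) = W x y : a conditional distribution on Y given X *)
Definition is_channel (W : X -> Y -> R) : Prop := forall x, is_dist (W x).

(* TV as a joint distribution on Y x X : Q y x = T(y) V(x|y) *)
Definition is_joint (Q : Y -> X -> R) : Prop :=
  (forall y x, 0 <= Q y x) /\ \sum_y \sum_x Q y x = 1.

(* absolute continuity of TV w.r.t. PW; otherwise D(TV||PW) = +oo *)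
Definition abs_cont (P : X -> R) (W : X -> Y -> R) (Q : Y -> X -> R) : Prop :=
  forall y x, Q y x != 0 -> P x * W x y != 0.

Definition margT (Q : Y -> X -> R) (y : Y) : R := \sum_x Q y x.

Definition condV (Q : Y -> X -> R) (y : Y) (x : X) : R := Q y x / margT Q y.

(* terms with Q y x = 0 contribute 0 (since 0 * _ = 0): convention 0 log 0 = 0 *)
Definition divD (P : X -> R) (W : X -> Y -> R) (Q : Y -> X -> R) : R :=
  \sum_y \sum_x Q y x * ln (Q y x / (P x * W x y)).

Definition A_TV (P : X -> R) (Q : Y -> X -> R) : R :=
  \sum_y \sum_x Q y x * ln (condV Q y x / P x).

Definition B_TV (W : X -> Y -> R) (Q : Y -> X -> R) : R :=
  \sum_y \sum_x Q y x * (- ln (W x y)).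

Definition pos (t : R) : R := Num.max 0 t.

Definition Fe (P : X -> R) (W : X -> Y -> R) (Rt K : R) (Q : Y -> X -> R) : R :=
  divD P W Q + pos (A_TV P Q - Rt + pos (B_TV W Q - K)).

Definition E0 (P : X -> R) (W : X -> Y -> R) (rho eta : R) : R :=
  - ln (\sum_y (\sum_x P x * (W x y `^ ((1 + eta) / (1 + rho)))) `^ (1 + rho)).

End Defs.

(* Main.v *)
Require Import Defs.
From mathcomp Require Import all_boot all_order all_algebra.
From mathcomp Require Import all_classical all_reals all_analysis.
From mathcomp Require Import ring lra.
Import Order.TTheory GRing.Theory Num.Theory.
Import numFieldNormedType.Exports.
Local Open Scope classical_set_scope.
Local Open Scope ring_scope.
Section Main.
Variables (R : realType) (X Y : finType) (W : X -> Y -> R) (P : X -> R).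
Hypotheses (HW : is_channel W) (HP : is_dist P).

Lemma P_ge0 x : 0 <= P x. Proof. by case: HP. Qed.
Lemma W_ge0 x y : 0 <= W x y. Proof. by case: (HW x). Qed.

Definition supp y x := P x * W x y != 0.

Lemma supp_P {y x} : supp y x -> 0 < P x.
Proof. rewrite /supp lt_neqAle P_ge0 andbT => /eqP H; apply/eqP => H0; apply: H; by rewrite -H0 mul0r. Qed.
Lemma supp_W {y x} : supp y x -> 0 < W x y.
Proof. rewrite /supp lt_neqAle W_ge0 andbT => /eqP H; apply/eqP => H0; apply: H; by rewrite -H0 mulr0. Qed.
Lemma nsupp y x : ~~ supp y x -> P x * W x y = 0.
Proof. by rewrite /supp negbK => /eqP. Qed.

Definition aex (p : R * R) := (1 + p.2) / (1 + p.1).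
Definition wp p y x := if supp y x then P x * expR (aex p * ln (W x y)) else 0.
Definition Gp p y := \sum_x wp p y x.
Definition sy y := [exists x, supp y x].
Definition Hp p y := if sy y then expR ((1 + p.1) * ln (Gp p y)) else 0.
Definition Zp p := \sum_y Hp p y.
Definition Vp p y x := wp p y x / Gp p y.
Definition Qp p y x := if supp y x then Hp p y / Zp p * Vp p y x else 0.

Lemma wp_ge0 p y x : 0 <= wp p y x.
Proof. rewrite /wp; case: ifP => // h; rewrite mulr_ge0 // ?expR_ge0 // ltW //; exact: supp_P h. Qed.
Lemma wp_gt0 {p y x} : supp y x -> 0 < wp p y x.
Proof. move=> h; rewrite /wp h mulr_gt0 // ?expR_gt0 //; exact: supp_P h. Qed.
Lemma supp_sy {y x} : supp y x -> sy y.
Proof. by move=> h; apply/existsP; exists x. Qed.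
Lemma Gp_gt0 {p y} : sy y -> 0 < Gp p y.
Proof.
case/existsP => x hx; apply: (lt_le_trans (wp_gt0 (p:=p) hx)).
rewrite /Gp (bigD1 x) //= lerDl sumr_ge0 // => i _; exact: wp_ge0.
Qed.
Lemma Gp_ge0 p y : 0 <= Gp p y.
Proof. by rewrite sumr_ge0 // => i _; exact: wp_ge0. Qed.
Lemma nsy_supp {y x} : ~~ sy y -> ~~ supp y x.
Proof. by apply: contra; exact: supp_sy. Qed.
Lemma Hp_ge0 p y : 0 <= Hp p y.
Proof. rewrite /Hp; case: ifP => _ //; exact: expR_ge0. Qed.
Lemma Hp_gt0 {p y} : sy y -> 0 < Hp p y.
Proof. by rewrite /Hp => ->; exact: expR_gt0. Qed.

Lemma exists_sy : exists y, sy y.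
Proof.
apply/existsP; apply: contraT; rewrite negb_exists => /forallP H.
have : \sum_x P x * \sum_y W x y = 0.
  under eq_bigr => x _ do rewrite mulr_sumr.
  rewrite exchange_big /=; apply: big1 => y _ /=; apply: big1 => x _.
  apply: nsupp; exact: nsy_supp (H y).
under eq_bigr => x _ do rewrite (proj2 (HW x)) mulr1.
by rewrite (proj2 HP) => /eqP; rewrite oner_eq0.
Qed.

Lemma Zp_gt0 p : 0 < Zp p.
Proof.
have [y hy] := exists_sy; apply: (lt_le_trans (Hp_gt0 (p:=p) hy)).
rewrite /Zp (bigD1 y) //= lerDl sumr_ge0 // => i _; exact: Hp_ge0.
Qed.

Lemma Vp_gt0 {p y x} : supp y x -> 0 < Vp p y x.
Proof. move=> h; rewrite /Vp divr_gt0 ?wp_gt0 ?Gp_gt0 //; exact: supp_sy h. Qed.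
Lemma Vp_ge0 p y x : 0 <= Vp p y x.
Proof. by rewrite /Vp divr_ge0 ?wp_ge0 ?Gp_ge0. Qed.
Lemma sum_Vp {p y} : sy y -> \sum_x Vp p y x = 1.
Proof. move=> h; rewrite /Vp -mulr_suml divff //; exact/lt0r_neq0/Gp_gt0. Qed.

Lemma Qp_gt0 {p y x} : supp y x -> 0 < Qp p y x.
Proof.
move=> h; rewrite /Qp h mulr_gt0 ?Vp_gt0 // divr_gt0 ?Zp_gt0 ?Hp_gt0 //; exact: supp_sy h.
Qed.
Lemma Qp_ge0 p y x : 0 <= Qp p y x.
Proof. rewrite /Qp; case: ifP => // _; rewrite mulr_ge0 ?Vp_ge0 // divr_ge0 ?Hp_ge0 //; exact/ltW/Zp_gt0. Qed.

Lemma margT_Qp p y : margT (Qp p) y = Hp p y / Zp p.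
Proof.
rewrite /margT; case: (boolP (sy y)) => hy.
  rewrite -[RHS]mulr1 -(sum_Vp (p:=p) hy) mulr_sumr; apply: eq_bigr => x _.
  rewrite /Qp; case: ifP => // /negbT h; by rewrite /Vp /wp (negbTE h) mul0r mulr0.
rewrite /Hp (negbTE hy) mul0r; apply: big1 => x _; by rewrite /Qp (negbTE (nsy_supp (x:=x) hy)).
Qed.

Lemma Qp_joint p : is_joint (Qp p).
Proof.
split; first exact: Qp_ge0.
under eq_bigr => y _ do rewrite -/(margT (Qp p) y) margT_Qp.
rewrite -mulr_suml divff //; exact/lt0r_neq0/Zp_gt0.
Qed.

Lemma Qp_abs p : abs_cont P W (Qp p).
Proof. move=> y x; rewrite /Qp; case: ifP => [h _|]; [exact: h|by rewrite eqxx]. Qed.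

Lemma condV_Qp {p y x} : supp y x -> condV (Qp p) y x = Vp p y x.
Proof.
move=> h; rewrite /condV margT_Qp /Qp h mulrC mulKf //.
apply/lt0r_neq0/divr_gt0; [exact/Hp_gt0/(supp_sy h)|exact: Zp_gt0].
Qed.


Lemma lnMp {a b : R} : 0 < a -> 0 < b -> ln (a * b) = ln a + ln b.
Proof. by move=> ha hb; rewrite lnM // posrE. Qed.
Lemma lnDp {a b : R} : 0 < a -> 0 < b -> ln (a / b) = ln a - ln b.
Proof. by move=> ha hb; rewrite ln_div // posrE. Qed.

Lemma gibbs {q r : R} : 0 < q -> 0 < r -> q - r <= q * ln (q / r).
Proof.
move=> hq hr.
have h1 : ln (r / q) <= r / q - 1.
  have := @le_ln1Dx R (r / q - 1); rewrite addrCA subrr addr0; apply.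
  by rewrite ltrBrDl subrr divr_gt0.
have -> : ln (q / r) = - ln (r / q) by rewrite !lnDp // opprB.
have e : q * (r / q) = r by rewrite mulrC mulfVK // gt_eqF.
have : q * ln (r / q) <= q * (r / q - 1) by rewrite ler_pM2l.
by rewrite mulrBr e mulr1 mulrN; lra.
Qed.

Lemma E0_eq r e : 0 < 1 + r -> 0 < 1 + e -> E0 P W r e = - ln (Zp (r, e)).
Proof.
move=> hr he; rewrite /E0 /Zp; congr (- ln _); apply: eq_bigr => y _.
have -> : \sum_x P x * W x y `^ ((1 + e) / (1 + r)) = Gp (r, e) y.
  apply: eq_bigr => x _; rewrite /wp; case: ifP => h.
    by rewrite /powR (gt_eqF (supp_W h)).
  have /eqP := nsupp y x (negbT h); rewrite mulf_eq0 => /orP[/eqP->|/eqP->].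
    by rewrite mul0r.
  by rewrite powR0 ?mulr0 // mulf_neq0 ?invr_eq0 // gt_eqF.
rewrite /Hp; case: ifP => h.
  by rewrite /powR (gt_eqF (Gp_gt0 h)).
have -> : Gp (r, e) y = 0.
  by apply: big1 => x _; rewrite /wp (negbTE (nsy_supp (x:=x) (negbT h))).
by rewrite powR0 // gt_eqF.
Qed.

Definition Lr (Q : Y -> X -> R) (p : R * R) :=
  divD P W Q + p.1 * A_TV P Q + p.2 * B_TV W Q.

Lemma margT_gt0 {Q : Y -> X -> R} {y x} : is_joint Q -> Q y x != 0 -> 0 < margT Q y.
Proof.
case=> hQ _ hne; have hpos : 0 < Q y x by rewrite lt_neqAle eq_sym hne hQ.
apply: (lt_le_trans hpos); rewrite /margT (bigD1 x) //= lerDl sumr_ge0 // => i _; exact: hQ.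
Qed.

Lemma margT0 {Q : Y -> X -> R} {y} : abs_cont P W Q -> ~~ sy y -> margT Q y = 0.
Proof.
move=> hA hy; apply: big1 => x _; apply/eqP; apply: contraNT (nsy_supp (x:=x) hy).
exact: hA.
Qed.

Lemma identity {Q : Y -> X -> R} {p} : is_joint Q -> abs_cont P W Q -> 0 < 1 + p.1 ->
  Lr Q p + ln (Zp p) =
  \sum_y \sum_x Q y x * (ln (Q y x / Qp p y x) + p.1 * ln (condV Q y x / Vp p y x)).
Proof.
move=> hJ hA hr.
have -> : ln (Zp p) = \sum_y \sum_x Q y x * ln (Zp p).
  by rewrite -[LHS]mul1r -(proj2 hJ) !mulr_suml; apply: eq_bigr => y _; rewrite mulr_suml.
rewrite /Lr /divD /A_TV /B_TV !mulr_sumr -!big_split /=; apply: eq_bigr => y _.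
rewrite !mulr_sumr -!big_split /=; apply: eq_bigr => x _.
have [->|hq] := eqVneq (Q y x) 0; first by rewrite !(mul0r, mulr0, addr0).
have hs : supp y x := hA y x hq.
have hP := supp_P hs; have hW := supp_W hs.
have hT := margT_gt0 hJ hq.
have hQ : 0 < Q y x by rewrite lt_neqAle eq_sym hq (proj1 hJ).
have hV : 0 < condV Q y x by rewrite /condV divr_gt0.
have hG := Gp_gt0 (p:=p) (supp_sy hs).
have hH := Hp_gt0 (p:=p) (supp_sy hs).
have hZ := Zp_gt0 p.
have hw := wp_gt0 (p:=p) hs.
have hVp := Vp_gt0 (p:=p) hs.
have hHZ := divr_gt0 hH hZ. have hQp := mulr_gt0 hHZ hVp.
rewrite /Qp hs (lnDp hQ hQp) (lnMp hHZ hVp) (lnDp hH hZ).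
rewrite (lnDp hV hVp) (lnDp hV hP) (lnDp hQ (mulr_gt0 hP hW)) (lnMp hP hW).
rewrite {1 2}/Vp (lnDp hw hG) /wp hs (lnMp hP (expR_gt0 _)) expRK.
rewrite /Hp (supp_sy hs) expRK.
have ha : aex p * (1 + p.1) = 1 + p.2 by rewrite /aex mulfVK // gt_eqF.
move: (aex p) ha => a ha.
have -> : p.2 = a * (1 + p.1) - 1 by rewrite ha addrC addKr.
ring.
Qed.

Lemma weak {Q : Y -> X -> R} {p} : is_joint Q -> abs_cont P W Q -> 0 <= p.1 ->
  - ln (Zp p) <= Lr Q p.
Proof.
move=> hJ hA hr.
have hr1 : 0 < 1 + p.1 by lra.
rewrite -(lerD2r (ln (Zp p))) addNr (identity hJ hA hr1).
under eq_bigr => y _ do under eq_bigr => x _ do rewrite mulrDr [Q y x * (p.1 * _)]mulrCA.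
under eq_bigr => y _ do rewrite big_split /= -mulr_sumr.
rewrite big_split /=.
apply: addr_ge0.
  apply: (@le_trans _ _ (\sum_y \sum_x (Q y x - Qp p y x))).
    under eq_bigr => y _ do rewrite sumrB.
    by rewrite sumrB (proj2 hJ) (proj2 (Qp_joint p)) subrr.
  apply: ler_sum => y _; apply: ler_sum => x _.
  have [->|hq] := eqVneq (Q y x) 0.
    by rewrite mul0r sub0r oppr_le0 Qp_ge0.
  have hs : supp y x := hA y x hq.
  apply: gibbs; last exact: Qp_gt0.
  by rewrite lt_neqAle eq_sym hq (proj1 hJ).
rewrite -mulr_sumr; apply: mulr_ge0 => //.
apply: sumr_ge0 => y _.
apply: (@le_trans _ _ (\sum_x (Q y x - margT Q y * Vp p y x))).
  rewrite sumrB -mulr_sumr -/(margT Q y).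
  case: (boolP (sy y)) => hy; first by rewrite sum_Vp // mulr1 subrr.
  by rewrite margT0 // mul0r subrr.
apply: ler_sum => x _.
have [->|hq] := eqVneq (Q y x) 0.
  by rewrite mul0r sub0r oppr_le0 mulr_ge0 ?Vp_ge0 // sumr_ge0 // => i _; exact: (proj1 hJ).
have hs : supp y x := hA y x hq.
have hT := margT_gt0 hJ hq.
have hQ : 0 < Q y x by rewrite lt_neqAle eq_sym hq (proj1 hJ).
have hV : 0 < condV Q y x by rewrite /condV divr_gt0.
have eQ : Q y x = margT Q y * condV Q y x by rewrite /condV mulrC mulfVK // gt_eqF.
rewrite {1 2}eQ -mulrBr -mulrA ler_pM2l //.
exact: gibbs hV (Vp_gt0 hs).
Qed.

Lemma attain p : 0 < 1 + p.1 -> Lr (Qp p) p = - ln (Zp p).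
Proof.
move=> hr; apply/eqP; rewrite -subr_eq0 opprK identity ?Qp_joint ?Qp_abs //.
apply/eqP; apply: big1 => y _; apply: big1 => x _.
case: (boolP (supp y x)) => hs; last by rewrite /Qp (negbTE hs) mul0r.
rewrite condV_Qp // !divff ?ln1 ?mulr0 ?addr0 ?mulr0 //; apply/lt0r_neq0.
  exact: Vp_gt0. exact: Qp_gt0. exact: Qp_joint. exact: Qp_abs.
Qed.

Lemma pos_bound (a b r e : R) : 0 <= e -> e <= r -> r <= 1 ->
  r * a + e * b <= pos (a + pos b).
Proof.
move=> h0 h1 h2; rewrite /pos.
have hb : e * b <= r * Num.max 0 b.
  case: (lerP 0 b) => hb; nra.
case: (lerP 0 (a + Num.max 0 b)) => hc; nra.
Qed.

Lemma Fe_lb (Q : Y -> X -> R) (Rt K r e : R) : 0 <= e -> e <= r -> r <= 1 ->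
  Lr Q (r, e) - r * Rt - e * K <= Fe P W Rt K Q.
Proof.
move=> h0 h1 h2; rewrite /Fe /Lr /=.
have := pos_bound (A_TV P Q - Rt) (B_TV W Q - K) r e h0 h1 h2; lra.
Qed.

Lemma kkt (a b r e : R) :
  (forall r' e', 0 <= e' -> e' <= r' -> r' <= 1 -> r' * a + e' * b <= r * a + e * b) ->
  pos (a + pos b) <= r * a + e * b.
Proof.
move=> H; have H0 := H 0 0 (lexx _) (lexx _) ler01.
have H1 := H 1 0 (lexx _) ler01 (lexx _).
have H2 := H 1 1 ler01 (lexx _) (lexx _).
rewrite /pos; case: (lerP 0 b) => hb; case: (lerP 0 (a + _)) => hc; lra.
Qed.

Lemma cont_fst (p : R * R) : {for p, continuous (fun q : R * R => q.1)}.
Proof. case: p => a b; exact: cvg_fst. Qed.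
Lemma cont_snd (p : R * R) : {for p, continuous (fun q : R * R => q.2)}.
Proof. case: p => a b; exact: cvg_snd. Qed.

Lemma cont_sum {T : topologicalType} {I : finType} (f : I -> T -> R) x :
  (forall i, {for x, continuous (f i)}) -> {for x, continuous (fun z => \sum_i f i z)}.
Proof.
move=> H; rewrite -fct_sumE; apply: (big_ind (fun g : T -> R => {for x, continuous g})).
- exact: cvg_cst.
- by move=> g h hg hh; apply: continuousD.
- by move=> i _; exact: H.
Qed.

Section Cont.
Variable p : R * R.
Hypothesis hp : 0 < 1 + p.1.

Lemma cont_aex : {for p, continuous aex}.
Proof.
apply: cvgM; first by apply: cvgD; [exact: cvg_cst|exact: cont_snd].
apply: cvgV; first by rewrite gt_eqF.
by apply: cvgD; [exact: cvg_cst|exact: cont_fst].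
Qed.

Lemma cont_wp y x : {for p, continuous (fun q => wp q y x)}.
Proof.
rewrite /wp; case: (boolP (supp y x)) => h /=; last exact: cvg_cst.
apply: cvgM; first exact: cvg_cst.
apply: (continuous_comp (f := fun q => aex q * ln (W x y))); last exact: continuous_expR.
by apply: cvgM; [exact: cont_aex|exact: cvg_cst].
Qed.

Lemma cont_Gp y : {for p, continuous (fun q => Gp q y)}.
Proof. by apply: cont_sum => x; exact: cont_wp. Qed.

Lemma cont_Hp y : {for p, continuous (fun q => Hp q y)}.
Proof.
rewrite /Hp; case: (boolP (sy y)) => h /=; last exact: cvg_cst.
apply: (@continuous_comp _ _ _ (fun q : R * R => (1 + q.1) * ln (Gp q y)) expR); last exact: continuous_expR.
apply: cvgM; first by apply: cvgD; [exact: cvg_cst|exact: cont_fst].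
apply: (continuous_comp (f := fun q => Gp q y)); first exact: cont_Gp.
exact/continuous_ln/Gp_gt0.
Qed.

Lemma cont_Zp : {for p, continuous Zp}.
Proof. by apply: cont_sum => y; exact: cont_Hp. Qed.

Lemma cont_g (Rt K : R) : {for p, continuous (fun q => - ln (Zp q) - q.1 * Rt - q.2 * K)}.
Proof.
apply: cvgB; last by apply: cvgM; [exact: cont_snd|exact: cvg_cst].
apply: cvgB; last by apply: cvgM; [exact: cont_fst|exact: cvg_cst].
apply: cvgN; apply: (continuous_comp (f := Zp)); first exact: cont_Zp.
exact/continuous_ln/Zp_gt0.
Qed.

Lemma cont_Vp y x : {for p, continuous (fun q => Vp q y x)}.
Proof.
rewrite /Vp; case: (boolP (sy y)) => h.
  apply: cvgM; first exact: cont_wp.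
  apply: cvgV; first exact/lt0r_neq0/Gp_gt0.
  exact: cont_Gp.
have e : forall q, wp q y x = 0 by move=> q; rewrite /wp (negbTE (nsy_supp h)).
have -> : (fun q => wp q y x / Gp q y) = fun=> 0 by apply/funext => q; rewrite e mul0r.
exact: cvg_cst.
Qed.

Lemma cont_Qp y x : {for p, continuous (fun q => Qp q y x)}.
Proof.
rewrite /Qp; case: (boolP (supp y x)) => h /=; last exact: cvg_cst.
apply: cvgM; last exact: cont_Vp.
apply: cvgM; first exact: cont_Hp.
apply: cvgV; first exact/lt0r_neq0/Zp_gt0.
exact: cont_Zp.
Qed.

End Cont.

Definition Aex p := \sum_y \sum_x (if supp y x then Qp p y x * ln (Vp p y x / P x) else 0).

Lemma Aex_eq p : A_TV P (Qp p) = Aex p.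
Proof.
apply: eq_bigr => y _; apply: eq_bigr => x _.
case: (boolP (supp y x)) => h; first by rewrite condV_Qp.
by rewrite /Qp (negbTE h) mul0r.
Qed.

Lemma cont_Aex p : 0 < 1 + p.1 -> {for p, continuous Aex}.
Proof.
move=> hp; apply: cont_sum => y; apply: cont_sum => x.
case: (boolP (supp y x)) => h /=; last exact: cvg_cst.
apply: cvgM; first exact: cont_Qp.
apply: (continuous_comp (f := fun q => Vp q y x / P x)).
  by apply: cvgM; [exact: cont_Vp|exact: cvg_cst].
apply/continuous_ln/divr_gt0; [exact: Vp_gt0|exact: supp_P h].
Qed.

Lemma cont_Bex p : 0 < 1 + p.1 -> {for p, continuous (fun q => B_TV W (Qp q))}.
Proof.
move=> hp; apply: cont_sum => y; apply: cont_sum => x.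
by apply: cvgM; [exact: cont_Qp|exact: cvg_cst].
Qed.

Lemma lim_le0 (f : R -> R) : {for 0, continuous f} ->
  (forall t, 0 < t -> t <= 1 -> f t <= 0) -> f 0 <= 0.
Proof.
move=> cf H.
have cf' : f t @[t --> (0:R)^'+] --> f 0 := cvg_at_right_filter cf.
suff hn : \forall t \near (0:R)^'+, [set x : R | x <= 0] (f t).
  have := @closed_cvg _ _ _ _ f _ (@closed_le _ 0) hn _ cf'. exact.
near=> t; apply: H; near: t; [exact: nbhs_right_gt | exact: nbhs_right_ltW ltr01].
Unshelve. all: by end_near.
Qed.

Definition Tri := [set q : R * R | 0 <= q.2 /\ q.2 <= q.1 /\ q.1 <= 1].

Lemma Tri_compact : compact Tri.
Proof.
have hB : compact (`[0, 1]%classic `*` `[0, 1]%classic : set (R * R)) :=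
  compact_setX (@segment_compact R 0 1) (@segment_compact R 0 1).
have hC : closed Tri.
  have -> : Tri = (fun q : R * R => q.2) @^-1` [set x | 0 <= x] `&`
     ((fun q : R * R => q.1 - q.2) @^-1` [set x | 0 <= x] `&`
      (fun q : R * R => q.1) @^-1` [set x | x <= 1]).
    apply/funext => q /=; apply/propext; rewrite /Tri /= subr_ge0; split.
      by case=> [? [? ?]]; split.
    by case=> [? [? ?]]; split.
  apply: closedI; last apply: closedI.
  + apply: (proj1 (continuous_closedP _)); last exact: closed_ge.
    by move=> q; exact: cont_snd.
  + apply: (proj1 (continuous_closedP _)); last exact: closed_ge.
    by move=> q; apply: cvgB; [exact: cont_fst|exact: cont_snd].
  + apply: (proj1 (continuous_closedP _)); last exact: closed_le.
    by move=> q; exact: cont_fst.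
have hS : Tri `<=` (`[0, 1]%classic `*` `[0, 1]%classic).
  move=> [r e] [h0 [h1 h2]]; simpl in h0, h1, h2; split => /=; rewrite in_itv /=; apply/andP; split => //; lra.
exact: (subclosed_compact hC hB hS).
Qed.

Theorem main_sec (Rt K : R) :
  exists Q0 : Y -> X -> R,
    [/\ is_joint Q0, abs_cont P W Q0,
      (forall Q, is_joint Q -> abs_cont P W Q -> Fe P W Rt K Q0 <= Fe P W Rt K Q),
      (forall rho eta, 0 <= eta -> eta <= rho -> rho <= 1 ->
         E0 P W rho eta - rho * Rt - eta * K <= Fe P W Rt K Q0) &
      (forall eps, 0 < eps -> exists rho eta,
         [/\ 0 <= eta, eta <= rho, rho <= 1 &
             Fe P W Rt K Q0 - eps < E0 P W rho eta - rho * Rt - eta * K])].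
Proof.
pose g q := - ln (Zp q) - q.1 * Rt - q.2 * K.
have Tne : Tri !=set0 by exists (0, 0); rewrite /Tri /=; split; [|split] => //; exact: ler01.
have cg : {within Tri, continuous g}.
  apply: continuous_in_subspaceT => q; rewrite inE => -[h0 [h1 h2]].
  apply: cont_g; lra.
have [[r0 e0] /set_mem /= [c0 [c1 c2]] gmax] := compact_EVT_max Tne Tri_compact cg.
simpl in c0, c1, c2.
have hr0 : 0 < 1 + r0 by lra.
have hr0' : 0 <= (r0, e0).1 by rewrite /=; lra.
pose Q0 := Qp (r0, e0).
pose a := A_TV P Q0 - Rt.
pose b := B_TV W Q0 - K.
have env : forall r1 e1, 0 <= e1 -> e1 <= r1 -> r1 <= 1 ->
    r1 * a + e1 * b <= r0 * a + e0 * b.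
  move=> r1 e1 d0 d1 d2.
  pose pt t := (r0 + t * (r1 - r0), e0 + t * (e1 - e0)).
  pose phi t := (r1 - r0) * (Aex (pt t) - Rt) + (e1 - e0) * (B_TV W (Qp (pt t)) - K).
  have pt0 : pt 0 = (r0, e0) by rewrite /pt !mul0r !addr0.
  have H1 : forall t, 0 < t -> t <= 1 -> phi t <= 0.
    move=> t t0 t1.
    have inT : Tri (pt t) by rewrite /Tri /pt /=; split; [|split]; nra.
    have hpt : 0 < 1 + (pt t).1 by rewrite /pt /=; nra.
    have hw := weak (Qp_joint (pt t)) (Qp_abs (pt t)) hr0'.
    have ha := attain (pt t) hpt.
    have eL : Lr (Qp (pt t)) (pt t) = Lr (Qp (pt t)) (r0, e0) +
       t * ((r1 - r0) * A_TV P (Qp (pt t)) + (e1 - e0) * B_TV W (Qp (pt t))).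
      by rewrite /Lr /pt /=; ring.
    have hg : - ln (Zp (pt t)) - (pt t).1 * Rt - (pt t).2 * K <=
        - ln (Zp (r0, e0)) - r0 * Rt - e0 * K := gmax (pt t) (mem_set inT).
    have hg' : Lr (Qp (pt t)) (pt t) - (pt t).1 * Rt - (pt t).2 * K <=
        - ln (Zp (r0, e0)) - r0 * Rt - e0 * K by rewrite ha; exact: hg.
    have hp1 : (pt t).1 = r0 + t * (r1 - r0) by [].
    have hp2 : (pt t).2 = e0 + t * (e1 - e0) by [].
    have : t * phi t <= 0.
      rewrite /phi -Aex_eq.
      move: hg' hw; rewrite eL hp1 hp2 /=.
      move: (Lr (Qp (pt t)) (r0, e0)) (A_TV P (Qp (pt t))) (B_TV W (Qp (pt t))) (ln (Zp (r0, e0))).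
      move=> L1 A1 B1 z1 h1' h2'; clear -h1' h2'; lra.
    by rewrite pmulr_rle0.
  have H2 : {for 0, continuous phi}.
    have c1' : (fun t : R => r0 + t * (r1 - r0)) @ (0:R) --> r0.
      have h : (fun t : R => r0 + t * (r1 - r0)) @ (0:R) --> r0 + 0 * (r1 - r0).
        by apply: cvgD; [exact: cvg_cst|apply: cvgM; [exact: cvg_id|exact: cvg_cst]].
      by rewrite mul0r addr0 in h.
    have c2' : (fun t : R => e0 + t * (e1 - e0)) @ (0:R) --> e0.
      have h : (fun t : R => e0 + t * (e1 - e0)) @ (0:R) --> e0 + 0 * (e1 - e0).
        by apply: cvgD; [exact: cvg_cst|apply: cvgM; [exact: cvg_id|exact: cvg_cst]].
      by rewrite mul0r addr0 in h.
    have cpt : (fun t : R => (r0 + t * (r1 - r0), e0 + t * (e1 - e0))) @ (0:R) --> ((r0, e0) : R * R).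
      exact: (cvg_pair c1' c2').
    have e : phi 0 = (r1 - r0) * (Aex (r0, e0) - Rt) + (e1 - e0) * (B_TV W (Qp (r0, e0)) - K).
      by rewrite /phi pt0.
    have LA : (fun t => Aex (pt t)) @ (0:R) --> Aex (r0, e0).
      exact: (cvg_comp _ _ cpt (cont_Aex (r0, e0) hr0)).
    have L : phi @ (0:R) --> ((r1 - r0) * (Aex (r0, e0) - Rt) + (e1 - e0) * (B_TV W (Qp (r0, e0)) - K)).
      apply: cvgD; apply: cvgM; try exact: cvg_cst; apply: cvgB; try exact: cvg_cst.
        exact: LA.
      exact: (cvg_comp _ _ cpt (cont_Bex (r0, e0) hr0)).
    change (phi @ (0:R) --> phi 0); rewrite e; exact: L.
  have := lim_le0 phi H2 H1; rewrite /phi pt0 -Aex_eq -/Q0 -/a -/b.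
  lra.
have hkkt := kkt a b r0 e0 env.
have hatt := attain (r0, e0) hr0.
have FeQ0 : Fe P W Rt K Q0 = g (r0, e0).
  apply/eqP; rewrite eq_le; apply/andP; split.
    rewrite /Fe /g /= -hatt /Lr /=; move: hkkt; rewrite /a /b /Q0; lra.
  rewrite /g /= -hatt; exact: Fe_lb.
exists Q0; split.
- exact: Qp_joint.
- exact: Qp_abs.
- move=> Q hJ hA; rewrite FeQ0 /g /=.
  apply: le_trans (Fe_lb Q Rt K r0 e0 c0 c1 c2).
  have := weak hJ hA hr0'; rewrite /=; lra.
- move=> rho eta h0 h1 h2.
  have hr : 0 < 1 + rho by apply: (lt_le_trans ltr01); rewrite lerDl; exact: le_trans h0 h1.
  have he : 0 < 1 + eta by apply: (lt_le_trans ltr01); rewrite lerDl.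
  rewrite FeQ0 (E0_eq rho eta hr he).
  have inT : Tri (rho, eta) by rewrite /Tri /=.
  exact: (gmax (rho, eta) (mem_set inT)).
- move=> eps heps; exists r0, e0; split => //.
  have he : 0 < 1 + e0 by apply: (lt_le_trans ltr01); rewrite lerDl.
  rewrite (E0_eq r0 e0 hr0 he) FeQ0 /g /=.
  move: (- ln (Zp (r0, e0)) - r0 * Rt - e0 * K) => z.
  by rewrite ltrBlDr ltrDl.
Qed.

End Main.

Theorem lemma7 (R : realType) (X Y : finType) (W : X -> Y -> R) (P : X -> R)
    (Rt K : R) :
  is_channel W -> is_dist P -> 0 < Rt -> 0 < K ->
  exists Q0 : Y -> X -> R,
    [/\ is_joint Q0, abs_cont P W Q0,
      (forall Q, is_joint Q -> abs_cont P W Q -> Fe P W Rt K Q0 <= Fe P W Rt K Q),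
      (forall rho eta, 0 <= eta -> eta <= rho -> rho <= 1 ->
         E0 P W rho eta - rho * Rt - eta * K <= Fe P W Rt K Q0) &
      (forall eps, 0 < eps -> exists rho eta,
         [/\ 0 <= eta, eta <= rho, rho <= 1 &
             Fe P W Rt K Q0 - eps < E0 P W rho eta - rho * Rt - eta * K])].
Proof.
move=> hW hP _ _; exact: (@main_sec R X Y W P hW hP Rt K).
Qed.
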